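(* Consider the multivariate multiple linear regression model $\mathbf{Y} = \mathbf{X}\boldsymbol{\beta}' + \boldsymbol{\mathcal{E}}$ with $K=2$ traits, where $\mathbf{Y}$ is an $n\times 2$ matrix of traits, $\mathbf{X}$ is an $n\times1$ genotype vector, $\boldsymbol{\beta}'=(\beta_1,\beta_2)$, and $\mathrm{vec}(\boldsymbol{\mathcal{E}})\sim N_{2n}(\mathbf{0},\mathbf{I}_n\otimes\boldsymbol{\Sigma})$ with $\boldsymbol{\Sigma}=\sigma^2\big((1-\rho)\mathbf{I}_2+\rho\mathbf{1}\mathbf{1}'\big)$, $\sigma^2>0$, $\rho$ such that $\boldsymbol{\Sigma}$ is positive definite. Assume the genetic effects of associated traits are equal in size, i.e. $|\beta_1|=|\beta_2|$ when both traits are associated. Then, asymptotically, the power of the MANOVA test of $H_0:\beta_1=\beta_2=0$ under $H_{a1}:\beta_1>0,\ \beta_2=0$ exceeds its power under (i) $H_{a2,1}:\beta_1=\beta_2>0$ when $\rho>1/2$; and (ii) $H_{a2,2}:\beta_1=-\beta_2>0$ when $\rho<-1/2$.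
   Context: $\mathbf{Y}$ and $\mathbf{X}$ are centered. The MANOVA test (Wilks' lambda, equivalent to the likelihood ratio test under the model) of $H_0:\boldsymbol{\beta}=\mathbf{0}$ uses the statistic $-n\log\big(|\mathbf{E}|/|\mathbf{H}+\mathbf{E}|\big)$, where $\hat{\boldsymbol{\beta}}=\mathbf{Y}'\mathbf{X}(\mathbf{X}'\mathbf{X})^{-1}$, $\mathbf{H}=\hat{\boldsymbol{\beta}}(\mathbf{X}'\mathbf{X})\hat{\boldsymbol{\beta}}'$ and $\mathbf{E}=\mathbf{Y}'\mathbf{Y}-\hat{\boldsymbol{\beta}}(\mathbf{X}'\mathbf{X})\hat{\boldsymbol{\beta}}'$; under $H_0$ it is approximately $\chi^2_2$ for large $n$, and the test rejects for large values. ''Asymptotically'' refers to the large-sample ($n\to\infty$) approximation of the power. The value of $\beta_1$ is the same under the compared alternatives. *)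

(* Defs.v *)
From HB Require Import structures.
From mathcomp Require Import all_boot all_order all_algebra.
From mathcomp Require Import all_classical all_reals all_analysis.
Set Implicit Arguments. Unset Strict Implicit. Unset Printing Implicit Defensive.
Import Order.TTheory GRing.Theory Num.Theory.
Local Open Scope ring_scope.

Definition Sigma (R : realType) (sigma2 rho : R) : 'M[R]_2 :=
  sigma2 *: ((1 - rho) *: 1%:M + rho *: const_mx 1).

Definition posdef (R : realType) (k : nat) (A : 'M[R]_k) : Prop :=
  A^T = A /\ forall v : 'cV[R]_k, v != 0 -> 0 < (v^T *m A *m v) 0 0.

Definition beta2 (R : realType) (b1 b2 : R) : 'cV[R]_2 :=
  \col_i (if i == ord0 then b1 else b2).

(* Noncentrality parameter of the asymptotic chi^2_2 distribution of the
   MANOVA / LRT statistic -n log(|E|/|H+E|) under the alternative beta: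
   lambda = (X'X) * beta' Sigma^{-1} beta. *)
Definition ncp (R : realType) (n : nat) (X : 'cV[R]_n) (S : 'M[R]_2)
    (beta : 'cV[R]_2) : R :=
  (X^T *m X) 0 0 * (beta^T *m invmx S *m beta) 0 0.

Definition phi (R : realType) (x : R) : R :=
  expR (- (x ^+ 2) / 2) / Num.sqrt (pi *+ 2).

(* Upper tail P(chi^2_2(lambda) > c) of the noncentral chi-square
   distribution with 2 degrees of freedom and noncentrality lambda,
   i.e. P((Z1 + sqrt lambda)^2 + Z2^2 > c) for independent standard
   normals Z1, Z2 (written as an iterated Lebesgue integral). *)
Definition ncchi2_2_tail (R : realType) (lambda c : R) : \bar R :=
  let A (x : R) := [set y : R | (c < (x + Num.sqrt lambda) ^+ 2 + y ^+ 2)%R]%classic in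
  (\int[@lebesgue_measure R]_(x in [set: R])
     ((phi x)%:E * \int[@lebesgue_measure R]_(y in A x) (phi y)%:E))%E.

(* Asymptotic power of the level-alpha MANOVA test with critical value c
   (the upper-alpha quantile of chi^2_2) against an alternative with
   noncentrality lambda. *)
Definition asym_power (R : realType) (c lambda : R) : \bar R :=
  ncchi2_2_tail lambda c.

(* Main.v *)
Require Import Defs.
From HB Require Import structures.
From mathcomp Require Import all_boot all_order all_algebra.
From mathcomp Require Import all_classical all_reals all_analysis.
From mathcomp Require Import measurable_realfun ring lra.
Import Order.TTheory GRing.Theory Num.Theory.
Import numFieldNormedType.Exports.
Local Open Scope classical_set_scope.
Local Open Scope ring_scope.

Section S.
Context {R : realType}.
Notation mu := (@lebesgue_measure R).

Lemma phiE (x : R) : phi x = normal_pdf 0 1 x.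
Proof.
rewrite /phi normal_pdfE ?oner_neq0 // /normal_peak /normal_fun.
rewrite subr0 expr1n mul1r mulrC.
by [].
Qed.

Lemma phi_gt0 (x : R) : 0 < phi x.
Proof. by rewrite /phi divr_gt0 ?expR_gt0 // sqrtr_gt0 pmulrn_lgt0 // pi_gt0. Qed.

Lemma phi_ge0 (x : R) : 0 <= phi x.
Proof. exact/ltW/phi_gt0. Qed.

Lemma phiN (x : R) : phi (- x) = phi x.
Proof. by rewrite /phi sqrrN. Qed.

Lemma phi_lt (x y : R) : `|x| < `|y| -> phi y < phi x.
Proof.
move=> xy; have hp : 0 < (Num.sqrt (pi *+ 2) : R)^-1.
  by rewrite invr_gt0 sqrtr_gt0 pmulrn_lgt0 // pi_gt0.
rewrite /phi ltr_pM2r //.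
rewrite ltr_expR ltr_pM2r ?invr_gt0 // ltrN2.
rewrite -(real_normK (num_real x)) -(real_normK (num_real y)).
have h0 : 0 <= `|x| by [].
nra.
Qed.

Lemma continuous_phi : continuous (@phi R).
Proof.
have -> : @phi R = normal_pdf 0 1 by apply/funext => x; rewrite phiE.
exact: continuous_normal_pdf.
Qed.

Lemma measurable_phi : measurable_fun setT (@phi R).
Proof.
have -> : @phi R = normal_pdf 0 1 by apply/funext => x; rewrite phiE.
exact: measurable_normal_pdf.
Qed.

Lemma integrable_phi : mu.-integrable setT (EFin \o (@phi R)).
Proof.
have -> : EFin \o @phi R = (fun x => (normal_pdf 0 1 x)%:E).
  by apply/funext => x; rewrite /= phiE.
exact: integrable_normal_pdf.
Qed.

Lemma integral_phi : (\int[mu]_x (phi x)%:E = 1)%E.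
Proof.
under eq_integral do rewrite phiE.
exact: integral_normal_pdf.
Qed.

Lemma integrable_phiS (A : set R) : measurable A ->
  mu.-integrable A (EFin \o (@phi R)).
Proof. by move=> mA; apply: integrableS integrable_phi. Qed.

Lemma RintE (A : set R) : measurable A ->
  (\int[mu]_(x in A) (phi x)%:E)%E = (\int[mu]_(x in A) phi x)%:E.
Proof.
move=> mA; rewrite /Rintegral fineK //.
apply: integrable_fin_num => //; exact: integrable_phiS.
Qed.

Lemma Rint_phi : \int[mu]_x phi x = 1.
Proof. by rewrite /Rintegral integral_phi. Qed.

Definition Phi (t : R) := \int[mu]_(x in `]-oo, t]) phi x.

Lemma Phi_ge0 t : 0 <= Phi t.
Proof. by apply: Rintegral_ge0 => x _; exact: phi_ge0. Qed.

Lemma Phi_le1 t : Phi t <= 1.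
Proof.
rewrite -Rint_phi /Phi /Rintegral fine_le //.
- by apply: integrable_fin_num => //; exact: integrable_phiS.
- by apply: integrable_fin_num => //; exact: integrable_phi.
apply: ge0_subset_integral => //.
- by apply/measurable_EFinP; exact: measurable_phi.
- by move=> x _; rewrite lee_fin phi_ge0.
Qed.

Lemma Phi_deriv t : derivable Phi t 1 /\ (Phi^`())%classic t = phi t.
Proof.
apply: (@continuous_FTC1 _ _ _ _ (t + 1)).
- by rewrite ltrDl.
- exact: integrable_phiS.
- by rewrite /= ltNyr.
- exact: continuous_phi.
Qed.

Lemma Phi_upper t : \int[mu]_(x in `]t, +oo[) phi x = 1 - Phi t.
Proof.
rewrite -Rint_phi -set_itvNyy /Phi.
rewrite Rintegral_itvB //.
rewrite set_itvNyy; exact: integrable_phi.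
Qed.

Lemma Phi_lower_open t : \int[mu]_(x in `]-oo, t[) phi x = Phi t.
Proof. by rewrite Rintegral_itv_bndo_bndc //; exact: integrable_phiS. Qed.


Lemma phi_lt2 (x y : R) : x ^+ 2 < y ^+ 2 -> phi y < phi x.
Proof.
move=> xy; have hp : 0 < (Num.sqrt (pi *+ 2) : R)^-1.
  by rewrite invr_gt0 sqrtr_gt0 pmulrn_lgt0 // pi_gt0.
rewrite /phi ltr_pM2r //.
by rewrite ltr_expR ltr_pM2r ?invr_gt0 // ltrN2.
Qed.

Lemma Phi_isd (t : R) : is_derive t 1 Phi (phi t).
Proof.
have [d e] := Phi_deriv t; rewrite derive1E in e; rewrite -e.
exact: derivableP.
Qed.

Lemma shift_isd (s u : R) : is_derive u 1 (fun v : R => v + s) 1.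
Proof.
have := is_deriveD (is_derive_id u 1) (is_derive_cst s u 1).
by rewrite addr0.
Qed.

Definition G (s u : R) := Phi (u + s) - Phi (u - s).

Lemma G_isd (s u : R) : is_derive u 1 (G s) (phi (u + s) - phi (u - s)).
Proof.
have h1 : is_derive u 1 (Phi \o (fun v => v + s)) (phi (u + s) * 1).
  by apply: is_derive1_comp; [exact: Phi_isd | exact: shift_isd].
have h2 : is_derive u 1 (Phi \o (fun v => v + - s)) (phi (u - s) * 1).
  by apply: is_derive1_comp; [exact: Phi_isd | exact: shift_isd].
have := is_deriveB h1 h2; rewrite !mulr1 => h.
exact: h.
Qed.

Lemma G_incr (s a b : R) : 0 < s -> a < b -> b <= 0 -> G s a < G s b.
Proof.
move=> s0 ab b0.
apply: (@gtr0_derive1_incr _ (G s) a b) => //.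
- move=> x _; exact: (@mathcomp.analysis.derive.ex_derive _ _ _ _ _ _ _ (G_isd s x)).
- move=> x; rewrite in_itv /= => /andP[ax xb].
  rewrite derive1E (@mathcomp.analysis.derive.derive_val _ _ _ _ _ _ _ (G_isd s x)).
  rewrite subr_gt0; apply: phi_lt2.
  have : x < 0 by apply: lt_le_trans b0.
  move=> x0; nra.
- apply: derivable_within_continuous => x _.
  exact: (@mathcomp.analysis.derive.ex_derive _ _ _ _ _ _ _ (G_isd s x)).
Qed.


Definition Sq (c y : R) := Num.sqrt (c - y ^+ 2).
Definition K (c m y : R) := 1 - G (Sq c y) (- m).

Lemma K_int (c m y : R) :
  (\int[mu]_(x in [set x | (c < (x + m) ^+ 2 + y ^+ 2)%R]) (phi x)%:E)%E = (K c m y)%:E.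
Proof.
rewrite /K /G /Sq.
have [d0|d0] := ltP (c - y ^+ 2) 0.
  rewrite ltr0_sqrtr // addr0 subr0 subrr subr0.
  have -> : [set x | c < (x + m) ^+ 2 + y ^+ 2] = setT.
    apply/seteqP; split => x // _ /=.
    have : 0 <= (x + m) ^+ 2 by exact: sqr_ge0.
    move=> h; lra.
  exact: integral_phi.
set s := Num.sqrt (c - y ^+ 2).
have s0 : 0 <= s by exact: sqrtr_ge0.
have s2 : s ^+ 2 = c - y ^+ 2 by rewrite sqr_sqrtr.
have -> : [set x | c < (x + m) ^+ 2 + y ^+ 2] =
    `]-oo, - m - s[ `|` `]- m + s, +oo[.
  apply/seteqP; split => x /=.
  - move=> h; rewrite !in_itv /= andbT.
    have [h1|h1] := ltP x (- m - s); first by left.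
    right; rewrite ltNge; apply/negP => h2.
    have : (x + m - s) * (x + m + s) <= 0.
      rewrite mulr_le0_ge0 //; lra.
    move=> h3; nra.
  - rewrite !in_itv /= andbT => -[h|h]; nra.
rewrite ge0_integral_setU //.
- rewrite !RintE // Phi_lower_open Phi_upper.
  rewrite -EFinD; congr EFin; rewrite [- m + s]addrC [- m - s]addrC.
  lra.
- by apply/measurable_EFinP; apply: measurable_funTS; exact: measurable_phi.
- by move=> x _; rewrite lee_fin phi_ge0.
- rewrite disj_set2E; apply/eqP/seteqP; split => x //=.
  rewrite !in_itv /= andbT => -[h1 h2]; lra.
Qed.


Definition Eset (c m : R) : set (R * R) :=
  [set z | (c < (z.1 + m) ^+ 2 + z.2 ^+ 2)%R].

Lemma measurable_Eset (c m : R) : measurable (Eset c m).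
Proof.
have mq : measurable_fun setT (fun z : R * R => (z.1 + m) ^+ 2 + z.2 ^+ 2).
  apply: measurable_funD.
  - apply: (measurable_funX (f := fun z : R * R => z.1 + m)).
    apply: measurable_funD; [exact: measurable_fst | exact: measurable_cst].
  - apply: (measurable_funX (f := fun z : R * R => z.2)).
    exact: measurable_snd.
have := mq measurableT `]c, +oo[%classic (measurable_itv _).
rewrite setTI.
have -> : (fun z : R * R => (z.1 + m) ^+ 2 + z.2 ^+ 2) @^-1` `]c, +oo[ = Eset c m.
  by apply/seteqP; split => z /=; rewrite in_itv /= andbT.
by [].
Qed.


Lemma measurable_lt_fun (q : R -> R) (c : R) : measurable_fun setT q ->
  measurable [set t | (c < q t)%R].
Proof.
move=> mq; have := mq measurableT `]c, +oo[%classic (measurable_itv _).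
rewrite setTI.
have -> : q @^-1` `]c, +oo[ = [set t | (c < q t)%R].
  by apply/seteqP; split => z /=; rewrite in_itv /= andbT.
by [].
Qed.

Lemma int_patch (A : set R) (k : R) : measurable A -> 0 <= k ->
  (\int[mu]_y (k * phi y * \1_A y)%:E = k%:E * \int[mu]_(y in A) (phi y)%:E)%E.
Proof.
move=> mA k0.
rewrite [in RHS]integral_mkcond -ge0_integralZl_EFin //.
- apply: eq_integral => y _; rewrite /patch indicE.
  case: ifPn => _; first by rewrite mulr1 EFinM.
  by rewrite mulr0 mule0.
- by move=> y _; rewrite /patch; case: ifPn => _ //; rewrite lee_fin phi_ge0.
- apply/(measurable_restrictT _ _).1 => //.
  by apply/measurable_EFinP; apply: measurable_funTS; exact: measurable_phi.
Qed.

Lemma meas_sq_shift (m : R) : measurable_fun setT (fun x : R => (x + m) ^+ 2).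
Proof.
apply: (measurable_funX (f := fun x : R => x + m)).
exact: (@measurable_funD _ R R setT id (cst m)).
Qed.

Lemma tail_fubini (lambda c : R) :
  ncchi2_2_tail lambda c =
  (\int[mu]_y (phi y * K c (Num.sqrt lambda) y)%:E)%E.
Proof.
rewrite /ncchi2_2_tail; set m := Num.sqrt lambda.
pose f (z : R * R) := (phi z.1 * phi z.2 * \1_(Eset c m) z)%:E.
have mf : measurable_fun setT f.
  apply/measurable_EFinP; apply: measurable_funM; last first.
    exact: measurable_indic (measurable_Eset c m).
  apply: measurable_funM.
  - exact: measurableT_comp measurable_phi measurable_fst.
  - exact: measurableT_comp measurable_phi measurable_snd.
have f0 : forall z, (0 <= f z)%E.
  move=> z; rewrite lee_fin mulr_ge0 // ?mulr_ge0 ?phi_ge0 //.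
have e1 : forall x, ((phi x)%:E *
    \int[mu]_(y in [set y | (c < (x + m) ^+ 2 + y ^+ 2)%R]) (phi y)%:E =
    \int[mu]_y f (x, y))%E.
  move=> x; rewrite -int_patch ?phi_ge0 //; last first.
    apply: (measurable_lt_fun (fun y => (x + m) ^+ 2 + y ^+ 2)).
    apply: (@measurable_funD _ R R setT (cst ((x + m) ^+ 2)) (fun y => y ^+ 2)) => //.
have e2 : forall y, (\int[mu]_x f (x, y) = (phi y * K c m y)%:E)%E.
  move=> y; rewrite EFinM -K_int -int_patch ?phi_ge0 //; last first.
    apply: (measurable_lt_fun (fun x => (x + m) ^+ 2 + y ^+ 2)).
    apply: (@measurable_funD _ R R setT (fun x => (x + m) ^+ 2) (cst (y ^+ 2))) => //.
    exact: meas_sq_shift.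
  by apply: eq_integral => x _; rewrite /f /= [phi y * _]mulrC.
under eq_integral do rewrite e1.
transitivity (\int[mu]_y \int[mu]_x f (x, y))%E.
  exact: (@fubini_tonelli _ _ _ _ R mu mu f mf f0).
by apply: eq_integral => y _; rewrite e2.
Qed.

Lemma G0 (u : R) : G 0 u = 0.
Proof. by rewrite /G addr0 subr0 subrr. Qed.

Lemma G_le1 (s u : R) : G s u <= 1.
Proof.
rewrite /G; have := Phi_le1 (u + s); have := Phi_ge0 (u - s); lra.
Qed.

Lemma K_ge0 c m y : 0 <= K c m y.
Proof. by rewrite /K subr_ge0 G_le1. Qed.

Lemma K_le2 c m y : K c m y <= 2.
Proof.
rewrite /K /G; have := Phi_le1 (- m - Sq c y); have := Phi_ge0 (- m + Sq c y); lra.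
Qed.

Lemma K_mono c m m' y : 0 <= m -> m < m' -> K c m y <= K c m' y.
Proof.
move=> m0 mm; rewrite /K lerD2l lerN2.
have [s0|s0] := eqVneq (Sq c y) 0; first by rewrite s0 !G0.
apply/ltW/G_incr; first by rewrite lt_neqAle eq_sym s0 sqrtr_ge0.
- by rewrite ltrN2.
- by rewrite oppr_le0.
Qed.

Lemma K_strict c m m' y : 0 <= m -> m < m' -> y ^+ 2 < c -> K c m y < K c m' y.
Proof.
move=> m0 mm yc; rewrite /K ltrD2l ltrN2.
apply/G_incr; first by rewrite sqrtr_gt0 subr_gt0.
- by rewrite ltrN2.
- by rewrite oppr_le0.
Qed.

Lemma Phi_cont : continuous Phi.
Proof.
move=> t; apply: differentiable_continuous.
by apply/derivable1_diffP; exact: (Phi_deriv t).1.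
Qed.

Lemma measurable_Sq (c : R) : measurable_fun setT (Sq c).
Proof.
apply: (@measurableT_comp _ _ _ R R R (@Num.sqrt R) setT (fun y : R => c - y ^+ 2)).
  exact: continuous_measurable_fun (@sqrt_continuous R).
apply: (@measurable_funB _ R R setT (cst c) (fun y => y ^+ 2)) => //.
Qed.

Lemma measurable_PhiD (a : R) (q : R -> R) : measurable_fun setT q ->
   measurable_fun setT (fun y : R => Phi (a + q y)).
Proof.
move=> mq.
apply: (@measurableT_comp _ _ _ R R R Phi setT (fun y : R => a + q y)).
  exact: continuous_measurable_fun Phi_cont.
exact: (@measurable_funD _ R R setT (cst a) q).
Qed.

Lemma measurable_K c m : measurable_fun setT (K c m).
Proof.
have e : K c m = (fun y => 1 - (Phi (- m + Sq c y) - Phi (- m + (- Sq c y)))).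
  by apply/funext => y; rewrite /K /G.
rewrite e.
apply: (@measurable_funB _ R R setT (cst 1)) => //.
apply: (@measurable_funB _ R R setT) => //.
- exact: measurable_PhiD (measurable_Sq c).
- apply: measurable_PhiD.
  exact: (@measurable_funN _ R R setT (Sq c) (measurable_Sq c)).
Qed.


Lemma int_phiK_fin c m : (\int[mu]_y (phi y * K c m y)%:E)%E \is a fin_num.
Proof.
rewrite ge0_fin_numE; last first.
  by apply: integral_ge0 => y _; rewrite lee_fin mulr_ge0 ?phi_ge0 ?K_ge0.
apply: (@le_lt_trans _ _ (\int[mu]_y (2 * phi y)%:E)%E).
  apply: ge0_le_integral => //.
  - by move=> y _; rewrite lee_fin mulr_ge0 ?phi_ge0 ?K_ge0.
  - apply/measurable_EFinP.
    exact: (@measurable_funM _ R R setT _ _ measurable_phi (measurable_K c m)).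
  - apply/measurable_EFinP.
    exact: (@measurable_funM _ R R setT (cst 2) _ (measurable_cst _) measurable_phi).
  - by move=> y _; rewrite lee_fin mulrC ler_pM2r ?K_le2 ?phi_gt0.
under eq_integral do rewrite EFinM.
rewrite ge0_integralZl_EFin //.
- by rewrite integral_phi mule1 ltry.
- by move=> y _; rewrite lee_fin phi_ge0.
- by apply/measurable_EFinP; exact: measurable_phi.
Qed.

Lemma tail_strict c m m' : 0 < c -> 0 <= m -> m < m' ->
  (\int[mu]_y (phi y * K c m y)%:E < \int[mu]_y (phi y * K c m' y)%:E)%E.
Proof.
move=> c0 m0 mm.
pose D y := K c m' y - K c m y.
have D0 y : 0 <= D y by rewrite /D subr_ge0 K_mono.
have mK m1 : measurable_fun setT (fun y => phi y * K c m1 y).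
  exact: (@measurable_funM _ R R setT _ _ measurable_phi (measurable_K c m1)).
have mD : measurable_fun setT (fun y => phi y * D y).
  apply: (@measurable_funM _ R R setT _ _ measurable_phi).
  exact: (@measurable_funB _ R R setT _ _ (measurable_K c m') (measurable_K c m)).
have e : (\int[mu]_y (phi y * K c m' y)%:E =
    \int[mu]_y ((phi y * K c m y)%:E + (phi y * D y)%:E))%E.
  apply: eq_integral => y _; rewrite -EFinD; congr EFin; rewrite /D; ring.
rewrite e ge0_integralD //; last 4 first.
- move=> y _; rewrite lee_fin; apply: mulr_ge0; [exact: phi_ge0 | exact: K_ge0].
- by apply/measurable_EFinP; exact: mK.
- by move=> y _; rewrite lee_fin; apply: mulr_ge0; [exact: phi_ge0 | exact: D0].
- by apply/measurable_EFinP; exact: mD.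
rewrite lteDl ?int_phiK_fin //.
rewrite lt_neqAle integral_ge0 ?andbT; last first.
  by move=> y _; rewrite lee_fin mulr_ge0 ?phi_ge0.
apply/negP => /eqP h.
have h2 : (\int[mu]_y `|(phi y * D y)%:E| = 0)%E.
  apply: etrans (esym h); apply: eq_integral => y _.
  by rewrite gee0_abs // lee_fin mulr_ge0 ?phi_ge0.
have mf : measurable_fun setT (fun y => (phi y * D y)%:E).
  by apply/measurable_EFinP.
have [N [mN N0 sub]] := (ae_eq_integral_abs mu measurableT mf).1 h2.
set s := Num.sqrt c.
have s0 : 0 < s by rewrite sqrtr_gt0.
have ss : s ^+ 2 = c by rewrite sqr_sqrtr // ltW.
have sub2 : `]- s, s[ `<=` N.
  move=> y; rewrite /= in_itv /= => /andP[h1 h3]; apply: sub => /= hy.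
  have yc : y ^+ 2 < c by rewrite -ss; nra.
  have Dp : 0 < D y by rewrite /D subr_gt0 K_strict.
  have := hy I; move=> /eqP; rewrite eqe mulf_eq0 => /orP[/eqP|/eqP].
  - by have := phi_gt0 y; lra.
  - by move: Dp; lra.
have E2 := @subset_measure0 _ _ _ mu _ _ (measurable_itv _) mN sub2 N0.
have E1 := @lebesgue_measure_itv R `]- s, s[.
have := etrans (esym E1) E2.
rewrite /= lte_fin.
have -> : - s < s by lra.
move=> /eqP; rewrite eqe; lra.
Qed.

Lemma ord2_cases (i : 'I_2) : i = ord0 \/ i = ord_max.
Proof. by case: i => [[|[|//]]] ?; [left|right]; apply/val_inj. Qed.

Lemma quad (M : 'M[R]_2) (u v : R) :
  ((beta2 u v)^T *m M *m (beta2 u v)) ord0 ord0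
  = u * u * M ord0 ord0 + u * v * M ord0 ord_max + v * u * M ord_max ord0
    + v * v * M ord_max ord_max.
Proof.
rewrite /beta2 !mxE !big_ord_recr !big_ord0 /= !mxE !big_ord_recr !big_ord0 /= !mxE /=.
have -> : widen_ord (leqnSn 1) ord_max = ord0 :> 'I_2 by apply/val_inj.
ring.
Qed.

Definition Minv (s2 r : R) : 'M[R]_2 :=
  \matrix_(i, j) (if i == j then (s2 * (1 - r ^+ 2))^-1 else - r * (s2 * (1 - r ^+ 2))^-1).

Lemma Sigma_inv (s2 r : R) : s2 != 0 -> 1 - r ^+ 2 != 0 ->
  invmx (Sigma s2 r) = Minv s2 r.
Proof.
move=> s0 r0.
have h : Sigma s2 r *m Minv s2 r = 1%:M.
  apply/matrixP => i j.
  rewrite !mxE !big_ord_recr !big_ord0 /= !mxE /=.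
  have -> : widen_ord (leqnSn 1) ord_max = ord0 :> 'I_2 by apply/val_inj.
  have hd : s2 * (1 - r ^+ 2) != 0 by rewrite mulf_neq0.
  case: (ord2_cases i) => ->; case: (ord2_cases j) => -> /=; field; by rewrite r0 s0.
have [uS _] := mulmx1_unit h.
by rewrite -[invmx _]mulmx1 -h mulmxA mulVmx // mul1mx.
Qed.

End S.

Lemma Sigma_entries (R : realType) (s2 r : R) :
  [/\ Sigma s2 r ord0 ord0 = s2, Sigma s2 r ord0 ord_max = s2 * r,
      Sigma s2 r ord_max ord0 = s2 * r & Sigma s2 r ord_max ord_max = s2].
Proof. by rewrite /Sigma !mxE /=; split; ring. Qed.

Theorem corollary1 (R : realType) (n : nat) (X : 'cV[R]_n)
    (sigma2 rho alpha c b : R) :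
  \sum_(i < n) X i ord0 = 0 ->
  X != 0 ->
  0 < sigma2 ->
  posdef (Sigma sigma2 rho) ->
  0 < alpha < 1 ->
  ncchi2_2_tail 0 c = alpha%:E ->
  0 < b ->
  (1 / 2 < rho ->
     (asym_power c (ncp X (Sigma sigma2 rho) (beta2 b b))
      < asym_power c (ncp X (Sigma sigma2 rho) (beta2 b 0)))%E) /\
  (rho < - (1 / 2) ->
     (asym_power c (ncp X (Sigma sigma2 rho) (beta2 b (- b)))
      < asym_power c (ncp X (Sigma sigma2 rho) (beta2 b 0)))%E).
Proof.
move=> _ X0 s0 [_ pd] /andP[a0 a1] hc b0.
have [E00 E01 E10 E11] := Sigma_entries _ sigma2 rho.
have bv0 (u v : R) : u != 0 -> beta2 u v != 0.
  move=> u0; apply/negP => /eqP h.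
  have := congr1 (fun M : 'cV[R]_2 => M ord0 ord0) h; rewrite !mxE /= => h2.
  by move: u0; rewrite h2 eqxx.
have r1 : rho < 1.
  have := pd _ (bv0 1 (-1) (oner_neq0 _)); rewrite quad E00 E01 E10 E11.
  move=> h; nra.
have r2 : - 1 < rho.
  have := pd _ (bv0 1 1 (oner_neq0 _)); rewrite quad E00 E01 E10 E11.
  move=> h; nra.
have k0 : 0 < (X^T *m X) 0 0.
  have : [exists i, X i ord0 != 0].
    case: (boolP [exists i, X i ord0 != 0]) => // /existsPn h.
    move/negP: X0 => X0; exfalso; apply: X0.
    apply/eqP/matrixP => i j; rewrite (ord1 j) !mxE.
    by move: (h i); rewrite negbK => /eqP.
  case/existsP => i Xi.
  rewrite mxE (bigD1 i) //= !mxE.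
  have p1 : 0 < X i 0 * X i 0 by rewrite -expr2 exprn_even_gt0.
  have p2 : 0 <= \sum_(j < n | j != i) X^T 0 j * X j 0.
    by apply: sumr_ge0 => j _; rewrite !mxE -expr2 sqr_ge0.
  lra.
have c0 : 0 < c.
  rewrite ltNge; apply/negP => cle.
  move: hc; rewrite tail_fubini sqrtr0.
  have -> : (\int[lebesgue_measure]_y (phi y * K c 0 y)%:E)%E = 1%E.
    rewrite -integral_phi; apply: eq_integral => y _.
    rewrite /K /Sq ler0_sqrtr ?G0 ?subr0 ?mulr1 //.
    have := sqr_ge0 y; lra.
  move=> /eqP; rewrite eqe => /eqP h; lra.
have mono (l1 l2 : R) : 0 <= l1 -> l1 < l2 ->
    (asym_power c l1 < asym_power c l2)%E.
  move=> l10 l12; rewrite /asym_power !tail_fubini; apply: tail_strict => //.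
  by rewrite ltr_sqrt //; lra.
have rr : 0 < 1 - rho ^+ 2 by nra.
have a0' : 0 < (sigma2 * (1 - rho ^+ 2))^-1 by rewrite invr_gt0 mulr_gt0.
set a := (sigma2 * (1 - rho ^+ 2))^-1 in a0'.
have ncpE (u v : R) : ncp X (Sigma sigma2 rho) (beta2 u v) =
    (X^T *m X) 0 0 * (a * (u * u + v * v) - 2 * rho * a * u * v).
  rewrite /ncp Sigma_inv ?(gt_eqF s0) ?(gt_eqF rr) //.
  rewrite quad /Minv !mxE /=; congr (_ * _); rewrite -/a; ring.
set k := (X^T *m X) 0 0 in k0 ncpE.
have w0 : 0 < k * (b * b) * a by rewrite mulr_gt0 // mulr_gt0 // mulr_gt0.
split => hr; apply: mono; rewrite !ncpE.
- have -> : k * (a * (b * b + b * b) - 2 * rho * a * b * b) = (k * (b * b) * a) * (2 - 2 * rho) by ring.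
  by rewrite mulr_ge0 //; [exact: ltW | lra].
- have -> : k * (a * (b * b + b * b) - 2 * rho * a * b * b) = (k * (b * b) * a) * (2 - 2 * rho) by ring.
  have -> : k * (a * (b * b + 0 * 0) - 2 * rho * a * b * 0) = (k * (b * b) * a) * 1 by ring.
  by rewrite ltr_pM2l //; lra.
- have -> : k * (a * (b * b + - b * - b) - 2 * rho * a * b * - b) = (k * (b * b) * a) * (2 + 2 * rho) by ring.
  by rewrite mulr_ge0 //; [exact: ltW | lra].
- have -> : k * (a * (b * b + - b * - b) - 2 * rho * a * b * - b) = (k * (b * b) * a) * (2 + 2 * rho) by ring.
  have -> : k * (a * (b * b + 0 * 0) - 2 * rho * a * b * 0) = (k * (b * b) * a) * 1 by ring.
  by rewrite ltr_pM2l //; lra.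
Qed.
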